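(* For a positive integer $c$ let $m_c=\frac{(2c)!}{2^c\,c!}\cdot 2c$, and for a positive integer $n$ let $C_n=\frac{1}{n+1}\binom{2n}{n}$ be the $n$th Catalan number. Then for all sufficiently large $n$ and every positive integer $c$ with $c+2\le \frac{\ln n}{4\ln\ln n}$, one has $m_c^{2n}\,C_n^{\,c} < (2n-1)!! = \frac{(2n)!}{n!\,2^n}$.
   Context: Here $\ln$ denotes the natural logarithm and $(2n-1)!!=1\cdot 3\cdot 5\cdots(2n-1)$. *)

(* Defs.v *)
From Stdlib Require Import Arith Reals.
Open Scope R_scope.

Definition m_c (c : nat) : R :=
  INR (fact (2 * c)) / (2 ^ c * INR (fact c)) * (2 * INR c).

Definition catalan (n : nat) : R := / (INR n + 1) * Binomial.C (2 * n) n.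

Definition dfact_odd (n : nat) : R := INR (fact (2 * n)) / (INR (fact n) * 2 ^ n).

(* Main.v *)
Require Import Defs.
From Stdlib Require Import Arith Reals Lra Lia.
Open Scope R_scope.

Lemma fact_up : forall a b, (Factorial.fact (a+b) <= Factorial.fact a * (a+b)^b)%nat.
Proof.
  intros a b; induction b as [|b IH].
  - rewrite Nat.add_0_r; simpl; lia.
  - replace (a + S b)%nat with (S (a+b)) by lia.
    change (Factorial.fact (S (a+b))) with (S (a+b) * Factorial.fact (a+b))%nat.
    assert ((a+b)^b <= (S (a+b))^b)%nat by (apply Nat.pow_le_mono_l; lia).
    simpl (S (a+b) ^ S b)%nat.
    assert (S (a + b) * Factorial.fact (a + b) <= S (a+b) * (Factorial.fact a * (a + b) ^ b))%nat
      by (apply Nat.mul_le_mono_l; exact IH).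
    assert (Factorial.fact a * (a + b) ^ b <= Factorial.fact a * S (a+b) ^ b)%nat
      by (apply Nat.mul_le_mono_l; assumption).
    nia.
Qed.

Lemma fact_lo : forall a b, (Factorial.fact a * a^b <= Factorial.fact (a+b))%nat.
Proof.
  intros a b; induction b as [|b IH].
  - rewrite Nat.add_0_r; simpl; lia.
  - replace (a + S b)%nat with (S (a+b)) by lia.
    change (Factorial.fact (S (a+b))) with (S (a+b) * Factorial.fact (a+b))%nat.
    simpl (a ^ S b)%nat.
    assert (a * Factorial.fact (a + b) <= S (a+b) * Factorial.fact (a+b))%nat
      by (apply Nat.mul_le_mono_r; lia).
    assert (a * (Factorial.fact a * a ^ b) <= a * Factorial.fact (a+b))%nat
      by (apply Nat.mul_le_mono_l; exact IH).
    nia.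
Qed.

Lemma fact_2n : forall n, (Factorial.fact (2*n) <= 4^n * Factorial.fact n * Factorial.fact n)%nat.
Proof.
  induction n as [|n IH].
  - simpl; lia.
  - replace (2 * S n)%nat with (S (S (2*n))) by lia.
    change (Factorial.fact (S (S (2*n)))) with (S (S (2*n)) * (S (2*n) * Factorial.fact (2*n)))%nat.
    change (Factorial.fact (S n)) with (S n * Factorial.fact n)%nat.
    simpl (4 ^ S n)%nat.
    assert (S (S (2*n)) * S (2*n) <= 4 * (S n * S n))%nat by nia.
    assert (S (S (2*n)) * (S (2*n) * Factorial.fact (2*n)) <= 4 * (S n * S n) * Factorial.fact (2*n))%nat.
    { rewrite Nat.mul_assoc. apply Nat.mul_le_mono_r. assumption. }
    assert (4 * (S n * S n) * Factorial.fact (2*n) <= 4 * (S n * S n) * (4 ^ n * Factorial.fact n * Factorial.fact n))%nat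
      by (apply Nat.mul_le_mono_l; exact IH).
    nia.
Qed.

Lemma pow_lt_strict : forall x y n, 0 <= x -> x < y -> (1 <= n)%nat -> x ^ n < y ^ n.
Proof.
  intros x y n Hx Hxy Hn. induction n as [|n IH]; [lia|].
  destruct n as [|n]. { simpl; lra. }
  assert (IH' : x ^ S n < y ^ S n) by (apply IH; lia).
  change (x ^ S (S n)) with (x * x ^ S n). change (y ^ S (S n)) with (y * y ^ S n).
  assert (0 <= x ^ S n) by (apply pow_le; lra).
  nra.
Qed.

Lemma INR_fact_pos : forall k, 0 < INR (Factorial.fact k).
Proof. intro k. apply lt_0_INR. apply Factorial.lt_O_fact. Qed.

Lemma div_le : forall a b c, 0 < b -> a <= c * b -> a / b <= c.
Proof.
  intros a b c Hb H. apply (Rmult_le_reg_r b); [lra|].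
  unfold Rdiv; rewrite Rmult_assoc, Rinv_l by lra; lra.
Qed.

Lemma le_div : forall a b c, 0 < b -> c * b <= a -> c <= a / b.
Proof.
  intros a b c Hb H. apply (Rmult_le_reg_r b); [lra|].
  unfold Rdiv; rewrite Rmult_assoc, Rinv_l by lra; lra.
Qed.

Lemma mc_bound : forall c, 0 <= m_c c <= (2 * INR c) ^ (c+1).
Proof.
  intro c. unfold m_c.
  pose proof (INR_fact_pos c) as Fc. pose proof (INR_fact_pos (2*c)) as F2.
  assert (P2 : 1 <= 2 ^ c) by (apply pow_R1_Rle; lra).
  assert (Hc : 0 <= INR c) by apply pos_INR.
  assert (Hup : INR (Factorial.fact (2*c)) <= INR (Factorial.fact c) * (2 * INR c) ^ c).
  { pose proof (fact_up c c) as H. apply le_INR in H.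
    replace (c + c)%nat with (2*c)%nat in H by lia.
    rewrite mult_INR, pow_INR, mult_INR in H. simpl (INR 2) in H. exact H. }
  assert (Q : 0 <= (2 * INR c) ^ c) by (apply pow_le; lra).
  assert (D : INR (Factorial.fact (2 * c)) / (2 ^ c * INR (Factorial.fact c)) <= (2 * INR c) ^ c).
  { apply div_le. { apply Rmult_lt_0_compat; lra. } nra. }
  assert (D0 : 0 <= INR (Factorial.fact (2 * c)) / (2 ^ c * INR (Factorial.fact c))).
  { unfold Rdiv. apply Rmult_le_pos; [lra|]. apply Rlt_le, Rinv_0_lt_compat, Rmult_lt_0_compat; lra. }
  split.
  - apply Rmult_le_pos; lra.
  - rewrite Nat.add_1_r. simpl (_ ^ S c). rewrite Rmult_comm.
    apply Rmult_le_compat; lra.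
Qed.

Lemma cat_bound : forall n, 0 <= catalan n <= 4 ^ n.
Proof.
  intro n. unfold catalan, Binomial.C.
  replace (2*n - n)%nat with n by lia.
  pose proof (INR_fact_pos n) as Fn. pose proof (INR_fact_pos (2*n)) as F2.
  assert (Hn : 0 <= INR n) by apply pos_INR.
  assert (Hup : INR (Factorial.fact (2*n)) <= 4 ^ n * INR (Factorial.fact n) * INR (Factorial.fact n)).
  { pose proof (fact_2n n) as H. apply le_INR in H.
    rewrite !mult_INR, pow_INR in H. simpl (INR 4) in H. replace (1+1+1+1) with 4 in H by ring. exact H. }
  assert (B0 : 0 <= INR (Factorial.fact (2 * n)) / (INR (Factorial.fact n) * INR (Factorial.fact n))).
  { unfold Rdiv. apply Rmult_le_pos; [lra|]. apply Rlt_le, Rinv_0_lt_compat, Rmult_lt_0_compat; lra. }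
  assert (B : INR (Factorial.fact (2 * n)) / (INR (Factorial.fact n) * INR (Factorial.fact n)) <= 4 ^ n).
  { apply div_le. { apply Rmult_lt_0_compat; lra. } lra. }
  assert (I0 : 0 < / (INR n + 1)) by (apply Rinv_0_lt_compat; lra).
  assert (I1 : / (INR n + 1) <= 1).
  { rewrite <- Rinv_1. apply Rinv_le_contravar; lra. }
  split; [apply Rmult_le_pos; lra|].
  apply Rle_trans with (1 * 4 ^ n); [|lra].
  apply Rmult_le_compat; lra.
Qed.

Lemma dfact_bound : forall n, (INR n / 2) ^ n <= dfact_odd n.
Proof.
  intro n. unfold dfact_odd.
  pose proof (INR_fact_pos n) as Fn.
  assert (Hlo : INR (Factorial.fact n) * INR n ^ n <= INR (Factorial.fact (2*n))).
  { pose proof (fact_lo n n) as H. apply le_INR in H.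
    replace (n + n)%nat with (2*n)%nat in H by lia.
    rewrite mult_INR, pow_INR in H. exact H. }
  apply le_div. { apply Rmult_lt_0_compat; [lra| apply pow_lt; lra]. }
  replace ((INR n / 2) ^ n * (INR (Factorial.fact n) * 2 ^ n)) with
     (INR (Factorial.fact n) * ((INR n / 2) ^ n * 2 ^ n)) by ring.
  rewrite <- Rpow_mult_distr. replace (INR n / 2 * 2) with (INR n) by field. exact Hlo.
Qed.

Theorem mainTheorem3 :
  exists N : nat, forall n : nat, (N <= n)%nat ->
    forall c : nat, (1 <= c)%nat ->
      INR c + 2 <= ln (INR n) / (4 * ln (ln (INR n))) ->
      (m_c c) ^ (2 * n) * (catalan n) ^ c < dfact_odd n.
Proof.
  exists 27%nat. intros n Hn c Hc H.
  assert (Hn27 : 27 <= INR n).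
  { apply le_INR in Hn. simpl in Hn. lra. }
  assert (Hc1 : 1 <= INR c) by (apply le_INR in Hc; simpl in Hc; lra).
  assert (E1 : exp 1 <= 3) by apply exp_le_3.
  assert (E0 : 0 < exp 1) by apply exp_pos.
  set (nR := INR n) in *.
  set (L := ln nR) in *.
  assert (HL3 : 3 <= L).
  { destruct (Rlt_or_le L 3) as [Hl|Hl]; [|exact Hl].
    exfalso. apply exp_increasing in Hl. unfold L in Hl. rewrite exp_ln in Hl by lra.
    replace 3 with (1+1+1) in Hl by ring. rewrite !exp_plus in Hl. nra. }
  set (lL := ln L) in *.
  assert (HlL : 1 <= lL).
  { destruct (Rlt_or_le lL 1) as [Hl|Hl]; [|exact Hl].
    exfalso. apply exp_increasing in Hl. unfold lL in Hl. rewrite exp_ln in Hl by lra. lra. }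
  assert (H' : (INR c + 2) * (4 * lL) <= L).
  { apply Rmult_le_compat_r with (r := 4 * lL) in H; [|lra].
    replace (L / (4 * lL) * (4 * lL)) with L in H by (field; lra). exact H. }
  assert (HL4 : 4 * INR c + 8 <= L) by nra.
  assert (Key : L ^ (4*c+8) <= nR).
  { rewrite <- Rpower_pow by lra. unfold Rpower.
    replace (INR (4*c+8)) with (4 * INR c + 8) by (rewrite plus_INR, mult_INR; simpl; ring).
    fold lL.
    assert (T : (4 * INR c + 8) * lL <= L) by nra.
    destruct (Rle_lt_or_eq_dec _ _ T) as [T'|T'].
    - apply Rlt_le. apply exp_increasing in T'. unfold L in T'. rewrite exp_ln in T' by lra. exact T'.
    - rewrite T'. unfold L. rewrite exp_ln by lra. lra. }
  set (A := (2 * INR c) ^ (2*c+2) * 4 ^ c).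
  assert (A0 : 0 <= A).
  { unfold A. apply Rmult_le_pos; apply pow_le; lra. }
  assert (HA : 2 * A < nR).
  { assert (a1 : 4 ^ c <= L ^ (2*c)).
    { rewrite pow_mult. apply pow_incr. nra. }
    assert (a2 : (2 * INR c) ^ (2*c+2) <= L ^ (2*c+2)).
    { apply pow_incr. lra. }
    assert (a3 : 2 * A <= L ^ (4*c+3)).
    { replace (4*c+3)%nat with (S ((2*c+2) + 2*c))%nat by lia.
      change (L ^ S (2*c+2 + 2*c)) with (L * L ^ (2*c+2 + 2*c)).
      rewrite (pow_add L (2*c+2) (2*c)). unfold A.
      assert (0 <= (2 * INR c) ^ (2*c+2)) by (apply pow_le; lra).
      assert (0 <= 4 ^ c) by (apply pow_le; lra).
      assert (0 <= L ^ (2*c+2)) by (apply pow_le; lra).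
      replace (2 * ((2 * INR c) ^ (2 * c + 2) * 4 ^ c)) with (2 * (2 * INR c) ^ (2 * c + 2) * 4 ^ c) by ring.
      replace (L * (L ^ (2 * c + 2) * L ^ (2 * c))) with (L * L ^ (2 * c + 2) * L ^ (2 * c)) by ring.
      apply Rmult_le_compat; try nra. }
    assert (a4 : L ^ (4*c+3) < L ^ (4*c+8)) by (apply Rlt_pow; [lra|lia]).
    lra. }
  pose proof (mc_bound c) as [M0 M1].
  pose proof (cat_bound n) as [C0 C1].
  assert (Step1 : m_c c ^ (2*n) * catalan n ^ c <= A ^ n).
  { apply Rle_trans with (((2 * INR c) ^ (c+1)) ^ (2*n) * (4 ^ n) ^ c).
    - apply Rmult_le_compat.
      + apply pow_le; lra.
      + apply pow_le; lra.
      + apply pow_incr; lra.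
      + apply pow_incr; lra.
    - unfold A. rewrite (Rpow_mult_distr ((2*INR c)^(2*c+2)) (4^c) n). rewrite <- !pow_mult.
      replace ((c+1)*(2*n))%nat with ((2*c+2)*n)%nat by lia.
      replace (n*c)%nat with (c*n)%nat by lia. right; reflexivity. }
  assert (Step2 : A ^ n < (nR / 2) ^ n).
  { apply pow_lt_strict; [lra|lra|lia]. }
  pose proof (dfact_bound n) as Step3. fold nR in Step3.
  lra.
Qed.
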